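(* Let $\phi_a,\phi_b,\phi_2\colon\mathbb{R}\to[0,\infty)$ be continuous probability density functions such that $\{\phi_a>0\}$, $\{\phi_b>0\}$ and $I_2=\{\phi_2>0\}$ are open intervals and $\inf\{\phi_a>0\}=\inf\{\phi_b>0\}=0$. Let $F_a,F_b,F_2$ be the corresponding cumulative distribution functions and suppose $F_a(t)\ge F_b(t)$ for all $t\in\mathbb{R}$. Put $K_a(x)=F_2^{-1}(F_a(x))$ for $x\in\{\phi_a>0\}$ and $K_b(x)=F_2^{-1}(F_b(x))$ for $x\in\{\phi_b>0\}$, where $F_2^{-1}$ is the inverse of $F_2$ restricted to $I_2$. Let $q\colon\mathbb{R}\to[0,\infty)$ be uniformly continuous and integrable, and define $$V_a=\int x\,\frac{\phi_a(x)}{\phi_2(K_a(x))}\,q(K_a(x))\,dx,\qquad V_b=\int x\,\frac{\phi_b(x)}{\phi_2(K_b(x))}\,q(K_b(x))\,dx,$$ the integrals taken over $\{\phi_a>0\}$ and $\{\phi_b>0\}$ respectively and assumed absolutely convergent. Then $V_a\le V_b$.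
   Context: Interpretation: $\phi_a,\phi_b$ are two candidate densities of a cash flow at horizon $T$ with the first stochastically dominated by the second, $\phi_2$ is the density of the terminal value of a traded benchmark security, $q$ its state price density, and $V_a,V_b$ are the values the valuation rule assigns to the two cash flows. *)

(* Defs.v *)
From HB Require Import structures.
From mathcomp Require Import all_boot all_order all_algebra.
From mathcomp Require Import all_classical all_reals all_analysis.
Set Implicit Arguments. Unset Strict Implicit. Unset Printing Implicit Defensive.
Import Order.TTheory GRing.Theory Num.Theory numFieldNormedType.Exports.
Local Open Scope classical_set_scope.
Local Open Scope ring_scope.

Section defs.
Variable R : realType.
Local Notation mu := (@lebesgue_measure R).

Definition is_density (phi : R -> R) : Prop :=
  (forall x, 0 <= phi x) /\
  mu.-integrable setT (fun x => (phi x)%:E) /\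
  (\int[mu]_x (phi x)%:E = 1)%E.

Definition supp (phi : R -> R) : set R := [set x | 0 < phi x].

Definition is_open_interval (S : set R) : Prop :=
  exists a b : \bar R, (a < b)%E /\ S = [set x : R | (a < x%:E)%E /\ (x%:E < b)%E].

Definition dens_cdf (phi : R -> R) (t : R) : R := Rintegral mu `]-oo, t] phi.

(* inverse of F restricted to I (the unique x in I with F x = y, when it exists) *)
Definition restr_inv (F : R -> R) (I : set R) (y : R) : R :=
  xget 0 [set x | I x /\ F x = y].
End defs.

(* Main.v *)
Require Import Defs.
From HB Require Import structures.
From mathcomp Require Import all_boot all_order all_algebra.
From mathcomp Require Import all_classical all_reals all_analysis.
Import Order.TTheory GRing.Theory Num.Theory numFieldNormedType.Exports.
Local Open Scope classical_set_scope.
Local Open Scope ring_scope.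
From mathcomp Require Import measurable_realfun.
From mathcomp Require Import ring lra.
Import Order.TTheory GRing.Theory Num.Theory numFieldNormedType.Exports.
Set Implicit Arguments. Unset Strict Implicit.

Section Gen.
Variable R : realType.
Local Notation mu := (@lebesgue_measure R).

Lemma ex_gt_integral (A : (set R)^nat) (f : R -> \bar R) (v : \bar R) :
  nondecreasing_seq A -> (forall n, measurable (A n)) ->
  (forall n, measurable_fun (A n) f) -> (forall n x, A n x -> (0 <= f x)%E) ->
  (v < \int[mu]_(x in \bigcup_n A n) f x)%E ->
  exists n, (v < \int[mu]_(x in A n) f x)%E.
Proof.
move=> ndA mA mf f0 vlt.
have cv := @ge0_nondecreasing_set_cvg_integral _ _ _ _ _ mu ndA mA mf f0.
have cv' := ereal_nondecreasing_cvgn (ge0_nondecreasing_set_nondecreasing_integral mu ndA mA mf f0).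
rewrite (cvg_unique (@ereal_hausdorff R) cv cv') in vlt.
by have [_ [n _ <-] ] := ereal_sup_gt vlt; exists n.
Qed.

Lemma bigcup_itvNy : \bigcup_n `]-oo, (n%:R : R)]%classic = [set: R].
Proof.
apply/seteqP; split => // x _; exists (Num.trunc x).+1 => //=.
by rewrite in_itv /= ltW// truncnS_gt.
Qed.

Lemma bigcup_itvy : \bigcup_n `](- (n%:R : R)), +oo[%classic = [set: R].
Proof.
apply/seteqP; split => // x _; exists (Num.trunc (- x)).+1 => //=.
by rewrite in_itv /= andbT ltrNl truncnS_gt.
Qed.

End Gen.

Definition sq {R : realType} (n : nat) : R := (n.+3%:R)^-1.
Definition tq {R : realType} (n : nat) : R := 1 - sq n.

Lemma sq_gt0 {R : realType} n : 0 < sq n :> R.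
Proof. by rewrite /sq invr_gt0 ltr0n. Qed.

Lemma sq_lt_half {R : realType} n : sq n < 2^-1 :> R.
Proof. by rewrite /sq ltf_pV2 ?posrE ?ltr0n// ltr_nat. Qed.

Lemma sq_lt_tq {R : realType} n : sq n < tq n :> R.
Proof. have := @sq_lt_half R n; rewrite /tq; lra. Qed.

Lemma tq_lt1 {R : realType} n : tq n < 1 :> R.
Proof. have := @sq_gt0 R n; rewrite /tq; lra. Qed.

Lemma sq_ge {R : realType} m n : (m <= n)%N -> sq n <= sq m :> R.
Proof. by move=> mn; rewrite /sq lef_pV2 ?posrE ?ltr0n// ler_nat. Qed.

Lemma sq_small {R : realType} (e : R) : 0 < e -> exists n, sq n < e.
Proof.
move=> e0; exists (Num.trunc e^-1); rewrite /sq invf_plt ?posrE ?ltr0n//.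
apply: (lt_le_trans (truncnS_gt _)); by rewrite ler_nat -addn3 -addn1 leq_add2l.
Qed.

Section Dens.
Variables (R : realType) (phi : R -> R).
Hypotheses (phic : continuous phi) (phid : is_density phi)
  (phio : is_open_interval (supp phi)).
Local Notation mu := (@lebesgue_measure R).
Local Notation F := (dens_cdf phi).
Local Notation S := (supp phi).

Lemma phi_ge0 x : 0 <= phi x. Proof. by case: phid. Qed.

Lemma int_phi : mu.-integrable setT (EFin \o phi). Proof. by case: phid => _ []. Qed.

Lemma int_phiT : (\int[mu]_x (phi x)%:E = 1)%E. Proof. by case: phid => _ []. Qed.

Lemma int_phiD D : measurable D -> mu.-integrable D (EFin \o phi).
Proof. by move=> mD; apply: integrableS int_phi. Qed.

Lemma S_conv x y z : S x -> S y -> x <= z -> z <= y -> S z.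
Proof.
case: phio => a [b [ab E]]; rewrite E /= => -[ax _] [_ yb] xz zy; split.
  by apply: (lt_le_trans ax); rewrite lee_fin.
by apply: (le_lt_trans _ yb); rewrite lee_fin.
Qed.

Lemma S_open : open S.
Proof.
have -> : S = phi @^-1` `]0, +oo[.
  by apply/funext => x; rewrite /supp /preimage /= in_itv /= andbT.
apply: open_comp; last exact: itv_open_ends_open.
by move=> x _; exact: phic.
Qed.

Lemma S_near x : S x -> \forall y \near x, S y.
Proof. by move=> Sx; apply: (open_nbhs_nbhs (conj S_open Sx)). Qed.

Lemma Rintegral_T : Rintegral mu setT phi = 1.
Proof. by rewrite /Rintegral int_phiT. Qed.

Lemma F_E x : (F x)%:E = (\int[mu]_(t in `]-oo, x]) (phi t)%:E)%E.
Proof. by rewrite /dens_cdf /Rintegral fineK// integrable_fin_num//; exact: int_phiD. Qed.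

Lemma F_deriv x : derivable F x 1 /\ derive1 F x = phi x.
Proof.
have xx : x < x + 1 by rewrite ltrDl ltr01.
have := @continuous_FTC1 R phi -oo%O x (x + 1) xx (int_phiD (measurable_itv _)) _ (@phic x).
by move=> H; apply: H; exact: ltNyr.
Qed.


Lemma F_isder (x : R) : is_derive x 1 F (phi x).
Proof. by have [dF F'] := F_deriv x; apply: DeriveDef => //; rewrite -derive1E. Qed.

Lemma F_cont : continuous F.
Proof.
move=> x; apply: differentiable_continuous; apply/derivable1_diffP.
by case: (F_deriv x).
Qed.

Lemma F_mono x y : x <= y -> F x <= F y.
Proof.
move=> xy; have [c _ E] := @MVT_segment R F phi x y xy (fun z _ => F_isder z)
  (continuous_subspaceT F_cont).
by rewrite -subr_ge0 E mulr_ge0 ?phi_ge0 ?subr_ge0.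
Qed.

Lemma F_smono x y : S x -> S y -> x < y -> F x < F y.
Proof.
move=> Sx Sy xy; have [c] := @MVT R F phi x y xy (fun z _ => F_isder z)
  (continuous_subspaceT F_cont).
rewrite in_itv /= => /andP[xc cy] E.
have Sc : S c by apply: (S_conv Sx Sy); exact: ltW.
by rewrite -subr_gt0 E mulr_gt0 ?subr_gt0.
Qed.

Lemma F_ge0 x : 0 <= F x.
Proof. by apply: Rintegral_ge0 => y _; exact: phi_ge0. Qed.

Lemma F_le1 x : F x <= 1.
Proof.
rewrite -lee_fin F_E -int_phiT; apply: ge0_subset_integral => //.
- exact: measurable_int int_phi.
- by move=> y _; rewrite lee_fin phi_ge0.
Qed.

Lemma S_left x : S x -> exists z, S z /\ z < x.
Proof.
move=> /S_near [e /= e0 H]; exists (x - e / 2); split; last first.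
  by rewrite ltrBlDr ltrDl divr_gt0.
apply: H => /=; rewrite opprB addrC subrK ger0_norm ?divr_ge0 ?ltW//.
by rewrite ltr_pdivrMr// ltr_pMr// ltr1n.
Qed.

Lemma S_right x : S x -> exists z, S z /\ x < z.
Proof.
move=> /S_near [e /= e0 H]; exists (x + e / 2); split; last first.
  by rewrite ltrDl divr_gt0.
apply: H => /=; rewrite opprD addrA subrr sub0r normrN ger0_norm ?divr_ge0 ?ltW//.
by rewrite ltr_pdivrMr// ltr_pMr// ltr1n.
Qed.

Lemma F_pos x : S x -> 0 < F x.
Proof. by move=> Sx; have [z [Sz zx]] := S_left Sx; exact: le_lt_trans (F_ge0 z) (F_smono Sz Sx zx). Qed.

Lemma F_lt1 x : S x -> F x < 1.
Proof. by move=> Sx; have [z [Sz zx]] := S_right Sx; exact: lt_le_trans (F_smono Sx Sz zx) (F_le1 z). Qed.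


Lemma F_split t : F t + Rintegral mu `]t, +oo[ phi = 1.
Proof.
rewrite -Rintegral_T -(itv_setU_setT false t) Rintegral_setU //.
- by rewrite itv_setU_setT; exact: int_phi.
- apply/disj_setPS => x [] /=; rewrite !in_itv /= andbT => xt tx.
  by move: (le_lt_trans xt tx); rewrite ltxx.
Qed.

Lemma ex_F_gt u : u < 1 -> exists n : nat, u < F n%:R.
Proof.
move=> u1.
have ndA : nondecreasing_seq (fun n : nat => `]-oo, (n%:R : R)]%classic).
  move=> m n mn; rewrite subsetEset; apply: subset_itvl.
  by rewrite bnd_simp ler_nat.
have := @ex_gt_integral R _ (EFin \o phi) u%:E ndA (fun n => measurable_itv _).
case.
- by move=> n; exact: measurable_funS measurableT (@subsetT _ _) (measurable_int mu int_phi).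
- by move=> n x _; rewrite lee_fin phi_ge0.
- by rewrite bigcup_itvNy (_ : (\int[mu]_x _ = 1)%E) ?lte_fin//; exact: int_phiT.
by move=> n H; exists n; rewrite -lte_fin F_E.
Qed.

Lemma ex_F_lt u : 0 < u -> exists n : nat, F (- n%:R) < u.
Proof.
move=> u0.
have ndA : nondecreasing_seq (fun n : nat => `](- (n%:R : R)), +oo[%classic).
  move=> m n mn; rewrite subsetEset; apply: subset_itvr.
  by rewrite bnd_simp lerN2 ler_nat.
have := @ex_gt_integral R _ (EFin \o phi) (1 - u)%:E ndA (fun n => measurable_itv _).
case.
- by move=> n; exact: measurable_funS measurableT (@subsetT _ _) (measurable_int mu int_phi).
- by move=> n x _; rewrite lee_fin phi_ge0.
- rewrite bigcup_itvy (_ : (\int[mu]_x _ = 1)%E) ?lte_fin ?gtrBl//; exact: int_phiT.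
move=> n H; exists n.
have := F_split (- n%:R); move: H.
rewrite -[X in (_ < X)%E]fineK ?integrable_fin_num//; last exact: int_phiD.
rewrite lte_fin => H E.
move: E H; set a := F _; rewrite -/(Rintegral _ _ _); set b := Rintegral _ _ _ => E H; lra.
Qed.


Lemma F_surj u : 0 < u -> u < 1 -> exists x, S x /\ F x = u.
Proof.
move=> u0 u1; have [n Hn] := ex_F_gt u1; have [m Hm] := ex_F_lt u0.
set a := - m%:R in Hm; set b := n%:R in Hn.
have ab : a <= b.
  rewrite leNgt; apply/negP => ba; have := F_mono (ltW ba); lra.
have [|c _ Fc] := @IVT R F a b u ab (continuous_subspaceT F_cont).
  have Fab : F a <= F b by exact: F_mono.
  apply/andP; split; first by rewrite ge_min ltW.
  by rewrite le_max (ltW Hn) orbT.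
exists c; split => //.
have [[z [Sz zc]]|nl] := pselect (exists z, S z /\ z <= c);
  have [[w [Sw cw]]|nr] := pselect (exists w, S w /\ c <= w).
- exact: S_conv Sz Sw zc cw.
- have z0 y : c <= y -> phi y = 0.
    move=> cy; apply/eqP; rewrite eq_le phi_ge0 andbT leNgt; apply/negP => py.
    by apply: nr; exists y.
  suff : F c = 1 by lra.
  rewrite -Rintegral_T /dens_cdf Rintegral_mkcond; congr (Rintegral _ _ _).
  apply/funext => x; rewrite patchE; case: (lerP x c) => xc.
    by rewrite mem_set //= in_itv /= xc.
  by rewrite z0 ?ltW//; case: ifP.
- have z0 y : y <= c -> phi y = 0.
    move=> cy; apply/eqP; rewrite eq_le phi_ge0 andbT leNgt; apply/negP => py.
    by apply: nl; exists y.
  suff : F c = 0 by lra.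
  rewrite /dens_cdf (@eq_Rintegral _ _ _ _ _ (fun=> 0)).
    by rewrite Rintegral_cst// mul0r.
  by move=> x; rewrite inE /= in_itv /= => xc; apply: z0.
- have z0 y : y <= c -> phi y = 0.
    move=> cy; apply/eqP; rewrite eq_le phi_ge0 andbT leNgt; apply/negP => py.
    by apply: nl; exists y.
  suff : F c = 0 by lra.
  rewrite /dens_cdf (@eq_Rintegral _ _ _ _ _ (fun=> 0)).
    by rewrite Rintegral_cst// mul0r.
  by move=> x; rewrite inE /= in_itv /= => xc; apply: z0.
Qed.

Local Notation Finv := (restr_inv F S).

Lemma Finv_spec u : 0 < u -> u < 1 -> S (Finv u) /\ F (Finv u) = u.
Proof. by move=> u0 u1; have [x Hx] := F_surj u0 u1; exact: (@xgetI _ 0 [set x | S x /\ F x = u] x Hx). Qed.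

Lemma F_inj x y : S x -> S y -> F x = F y -> x = y.
Proof.
move=> Sx Sy E; case: (ltgtP x y) => // h.
- by have := F_smono Sx Sy h; rewrite E ltxx.
- by have := F_smono Sy Sx h; rewrite E ltxx.
Qed.

Lemma FinvK x : S x -> Finv (F x) = x.
Proof.
move=> Sx; have [S' E] := Finv_spec (F_pos Sx) (F_lt1 Sx).
exact: F_inj S' Sx E.
Qed.

Lemma Finv_lt u v : 0 < u -> u < v -> v < 1 -> Finv u < Finv v.
Proof.
move=> u0 uv v1; have [Su Fu] := Finv_spec u0 (lt_trans uv v1).
have [Sv Fv] := Finv_spec (lt_trans u0 uv) v1.
rewrite ltNge; apply/negP => /F_mono; rewrite Fu Fv => vu.
by move: (lt_le_trans uv vu); rewrite ltxx.
Qed.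

Lemma Finv_le u v : 0 < u -> u <= v -> v < 1 -> Finv u <= Finv v.
Proof.
move=> u0; rewrite le_eqVlt => /predU1P[-> //|uv] v1.
exact/ltW/Finv_lt.
Qed.

Lemma Finv_der (u : R) : 0 < u -> u < 1 -> is_derive u 1 Finv (phi (Finv u))^-1.
Proof.
move=> u0 u1; have [Sx Fx] := Finv_spec u0 u1.
have := @is_derive_inverse R F Finv (phi (Finv u)) (Finv u).
rewrite Fx; apply.
- near=> y; apply: FinvK; near: y; exact: S_near.
- by apply: filterE => y; exact: F_cont.
- exact: F_isder.
- by rewrite gt_eqF.
Unshelve. all: by end_near. Qed.

Lemma Finv_cont (u : R) : 0 < u -> u < 1 -> {for u, continuous Finv}.
Proof.
move=> u0 u1; have [d _] := Finv_der u0 u1.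
by apply: differentiable_continuous; apply/derivable1_diffP.
Qed.


Definition Aseq n := `[Finv (sq n), Finv (tq n)]%classic.

Lemma Aseq_nd : nondecreasing_seq Aseq.
Proof.
move=> m n mn; rewrite subsetEset; apply: subset_itv; rewrite bnd_simp.
- apply: Finv_le; [exact: sq_gt0|exact: sq_ge|exact: lt_trans (sq_lt_tq _) (tq_lt1 _)].
- apply: Finv_le; [exact: lt_trans (sq_gt0 _) (sq_lt_tq _)| |exact: tq_lt1].
  by rewrite /tq lerB// sq_ge.
Qed.

Lemma Aseq_sub n : Aseq n `<=` S.
Proof.
have [S1 _] := Finv_spec (sq_gt0 n) (lt_trans (sq_lt_tq n) (tq_lt1 n)).
have [S2 _] := Finv_spec (lt_trans (sq_gt0 n) (sq_lt_tq n)) (tq_lt1 n).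
move=> x; rewrite /Aseq /= in_itv /= => /andP[h1 h2]; exact: S_conv S1 S2 h1 h2.
Qed.

Lemma Aseq_cup : \bigcup_n Aseq n = S.
Proof.
apply/seteqP; split; first by move=> x [n _]; exact: Aseq_sub.
move=> x Sx; have F0 := F_pos Sx; have F1 := F_lt1 Sx.
have [n Hn] := @sq_small R (Num.min (F x) (1 - F x)) ltac:(rewrite lt_min F0 subr_gt0 F1//).
move: Hn; rewrite lt_min => /andP[h1 h2].
exists n => //; rewrite /Aseq /= in_itv /=; apply/andP; split.
- rewrite -[X in _ <= X](FinvK Sx); apply: Finv_le => //; [exact: sq_gt0|exact: ltW].
- rewrite -[X in X <= _](FinvK Sx); apply: Finv_le => //; last exact: tq_lt1.
  by rewrite /tq; lra.
Qed.

End Dens.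

Lemma q_cont (R : realType) (q : R -> R) : unif_continuous q -> continuous q.
Proof.
move=> /unif_continuousP qu x; apply/cvgrPdist_lt => e e0.
have [d d0 H] := qu e e0; near=> y.
have := H (x, y); rewrite /ball /=; apply.
near: y; exact: (nbhsx_ballx x d d0).
Unshelve. all: by end_near. Qed.

Lemma cont_near_eq (R : realType) (f g : R -> R) x :
  {near x, f =1 g} -> {for x, continuous g} -> {for x, continuous f}.
Proof.
move=> fg gc; have fgx : f x = g x by exact: (nbhs_singleton fg).
rewrite /prop_for /continuous_at fgx; apply: cvg_trans _ gc; apply: near_eq_cvg; by apply: filterS fg => y ->.
Qed.

Section Transfer.
Variables (R : realType) (phi phi2 q : R -> R) (bphi : \bar R).
Hypotheses (phic : continuous phi) (phid : is_density phi)
  (phio : is_open_interval (supp phi))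
  (phi2c : continuous phi2) (phi2d : is_density phi2)
  (phi2o : is_open_interval (supp phi2))
  (suppE : supp phi = [set x : R | 0 < x /\ (x%:E < bphi)%E])
  (q0 : forall x, 0 <= q x) (qc : continuous q).
Local Notation mu := (@lebesgue_measure R).
Local Notation F := (dens_cdf phi).
Local Notation F2 := (dens_cdf phi2).
Local Notation S := (supp phi).
Local Notation S2 := (supp phi2).
Local Notation K := (fun x : R => restr_inv F2 S2 (F x)).
Local Notation L := (fun y : R => restr_inv F S (F2 y)).
Local Notation g := (fun x : R => x * (phi x / phi2 (K x)) * q (K x)).
Local Notation G := (fun y : R => L y * q y).
Local Notation Kd := (fun x : R => phi x * (phi2 (K x))^-1).

Lemma K_spec x : S x -> S2 (K x) /\ F2 (K x) = F x.
Proof. by move=> Sx; apply: Finv_spec => //; [exact: F_pos|exact: F_lt1]. Qed.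

Lemma L_spec y : S2 y -> S (L y) /\ F (L y) = F2 y.
Proof. by move=> Sy; apply: Finv_spec => //; [exact: F_pos|exact: F_lt1]. Qed.

Lemma LK x : S x -> L (K x) = x.
Proof. by move=> Sx; have [_ ->] := K_spec Sx; exact: FinvK. Qed.

Lemma K_der x : S x -> is_derive x 1 K (Kd x).
Proof.
move=> Sx; have [_ E] := K_spec Sx.
have := @is_derive1_comp R (restr_inv F2 S2) F x _ _ _ (F_isder phic phid x).
rewrite mulrC; apply.
have := Finv_der phi2c phi2d phi2o (F_pos phic phid phio Sx) (F_lt1 phic phid phio Sx).
done.
Qed.


Lemma L_der y : S2 y -> is_derive y 1 L ((phi (L y))^-1 * phi2 y).
Proof.
move=> Sy; have [_ E] := L_spec Sy.
have := @is_derive1_comp R (restr_inv F S) F2 y _ _ _ (F_isder phi2c phi2d y).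
apply.
have := Finv_der phic phid phio (F_pos phi2c phi2d phi2o Sy) (F_lt1 phi2c phi2d phi2o Sy).
done.
Qed.

Lemma K_cont x : S x -> {for x, continuous K}.
Proof.
move=> Sx; have [d _] := K_der Sx.
by apply: differentiable_continuous; apply/derivable1_diffP.
Qed.

Lemma L_cont y : S2 y -> {for y, continuous L}.
Proof.
move=> Sy; have [d _] := L_der Sy.
by apply: differentiable_continuous; apply/derivable1_diffP.
Qed.

Lemma Kd_cont x : S x -> {for x, continuous Kd}.
Proof.
move=> Sx; have [SK _] := K_spec Sx.
apply: continuousM; first exact: phic.
apply: continuousV; first by rewrite gt_eqF.
exact: continuous_comp (K_cont Sx) (@phi2c _).
Qed.

Lemma K'_eq y : S y -> derive1 K y = Kd y.
Proof. by move=> Sy; rewrite derive1E; case: (K_der Sy). Qed.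

Lemma K'_cont x : S x -> {for x, continuous (derive1 K)}.
Proof.
move=> Sx; apply: cont_near_eq (Kd_cont Sx).
near=> y; apply: K'_eq; near: y; exact: S_near.
Unshelve. all: by end_near. Qed.

Lemma G_cont y : S2 y -> {for y, continuous G}.
Proof. by move=> Sy; apply: continuousM; [exact: L_cont|exact: qc]. Qed.

Lemma g_cont x : S x -> {for x, continuous g}.
Proof.
move=> Sx; apply: continuousM; last exact: continuous_comp (K_cont Sx) (@qc _).
by apply: continuousM; [exact: cvg_id|exact: Kd_cont].
Qed.

Lemma K_lt x y : S x -> S y -> x < y -> K x < K y.
Proof.
move=> Sx Sy xy /=; apply: (Finv_lt phi2c phi2d phi2o).
- by have := F_pos phic phid phio Sx.
- by have := F_smono phic phid phio Sx Sy xy.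
- by have := F_lt1 phic phid phio Sy.
Qed.


Lemma subst_n n :
  (\int[mu]_(y in Aseq phi2 n) (G y)%:E = \int[mu]_(x in Aseq phi n) (g x)%:E)%E.
Proof.
set c := restr_inv F S (sq n); set d := restr_inv F S (tq n).
have [Sc Fc] := Finv_spec phic phid phio (sq_gt0 n) (lt_trans (sq_lt_tq n) (tq_lt1 n)).
have [Sd Fd] := Finv_spec phic phid phio (lt_trans (sq_gt0 n) (sq_lt_tq n)) (tq_lt1 n).
have cd : c <= d.
  by apply: (Finv_le phic phid phio) (sq_gt0 n) (ltW (sq_lt_tq n)) (tq_lt1 n).
have sub : `[c, d] `<=` S := @Aseq_sub _ _ phic phid phio n.
have -> : Aseq phi2 n = `[K c, K d]%classic by rewrite /Aseq /= Fc Fd.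
rewrite (@integration_by_substitution_increasing R K G c d cd).
- apply: eq_integral => x /set_mem xin; congr EFin.
  transitivity (L (K x) * q (K x) * derive1 K x); first by [].
  by rewrite (K'_eq (sub _ xin)) (LK (sub _ xin)) mulrAC.
- move=> x y xin yin xy; exact: K_lt (sub _ xin) (sub _ yin) xy.
- by move=> x xin; apply: K'_cont; apply: sub; exact: subset_itv_oo_cc.
- apply/cvg_ex; exists (derive1 K c); apply: cvg_at_right_filter; exact: K'_cont Sc.
- apply/cvg_ex; exists (derive1 K d); apply: cvg_at_left_filter; exact: K'_cont Sd.
- split.
  + move=> x xin; have [dd _] := K_der (sub _ (subset_itv_oo_cc xin)); exact: dd.
  + apply: cvg_at_right_filter; exact: K_cont Sc.
  + apply: cvg_at_left_filter; exact: K_cont Sd.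
- apply: continuous_in_subspaceT => y /set_mem yin; apply: G_cont.
  move: yin; rewrite /= in_itv /= => /andP[h1 h2].
  by have := S_conv phi2o (K_spec Sc).1 (K_spec Sd).1 h1 h2.
Qed.


Lemma G_meas : measurable_fun S2 G.
Proof.
by apply: open_continuous_measurable_fun (S_open phi2c) _ => y /set_mem Sy; exact: G_cont.
Qed.

Lemma G_measE : measurable_fun S2 (fun y => (G y)%:E).
Proof. exact: (proj2 (measurable_EFinP _ _) G_meas). Qed.

Lemma G_ge0 y : S2 y -> 0 <= G y.
Proof.
move=> Sy; have := (L_spec Sy).1; rewrite suppE => -[y0 _].
by apply: mulr_ge0; [exact: ltW|exact: q0].
Qed.

Lemma transfer :
  (\int[mu]_(x in S) (g x)%:E = \int[mu]_(y in S2) (G y)%:E)%E.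
Proof.
have mS : measurable S by exact: open_measurable (S_open phic).
have mS2 : measurable S2 by exact: open_measurable (S_open phi2c).
have mg : measurable_fun S g.
  by apply: open_continuous_measurable_fun (S_open phic) _ => x /set_mem Sx; exact: g_cont.
have mG : measurable_fun S2 G.
  by apply: open_continuous_measurable_fun (S_open phi2c) _ => y /set_mem Sy; exact: G_cont.
have cv1 := @ge0_nondecreasing_set_cvg_integral _ _ _ _ (fun x : measurableTypeR R => (g x)%:E) mu
  (Aseq_nd phic phid phio) (fun n => measurable_itv _).
have cv2 := @ge0_nondecreasing_set_cvg_integral _ _ _ _ (fun x : measurableTypeR R => (G x)%:E) mu
  (Aseq_nd phi2c phi2d phi2o) (fun n => measurable_itv _).
rewrite (Aseq_cup phic phid phio) in cv1.
rewrite (Aseq_cup phi2c phi2d phi2o) in cv2.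
have {}cv1 := cv1 (fun n => measurable_funS mS (@Aseq_sub _ _ phic phid phio n)
  (proj2 (measurable_EFinP _ _) mg)).
have {}cv2 := cv2 (fun n => measurable_funS mS2 (@Aseq_sub _ _ phi2c phi2d phi2o n)
  (proj2 (measurable_EFinP _ _) mG)).
have g0 : forall n x, Aseq phi n x -> (0 <= (g x)%:E)%E.
  move=> n x /(@Aseq_sub _ _ phic phid phio n) Sx.
  have := Sx; rewrite suppE => -[x0 _].
  rewrite lee_fin; apply: mulr_ge0; last exact: q0.
  apply: mulr_ge0; first exact: ltW.
  by apply: divr_ge0; exact: phi_ge0.
have G0 : forall n y, Aseq phi2 n y -> (0 <= (G y)%:E)%E.
  move=> n y /(@Aseq_sub _ _ phi2c phi2d phi2o n) Sy.
  have := (L_spec Sy).1; rewrite suppE => -[y0 _].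
  by rewrite lee_fin; apply: mulr_ge0; [exact: ltW|exact: q0].
have {}cv1 := cv1 g0.
have {}cv2 := cv2 G0.
have cv2' : (\int[mu]_(x in Aseq phi i) (g x)%:E)%E @[i --> \oo] -->
    (\int[mu]_(y in S2) (G y)%:E)%E.
  apply: cvg_trans cv2; apply: near_eq_cvg; apply: filterE => n.
  by rewrite subst_n.
exact: (cvg_unique (@ereal_hausdorff R) cv1 cv2').
Qed.

End Transfer.

Lemma L_compare (R : realType) (phi_a phi_b phi_2 : R -> R) (ba bb : \bar R) :
  continuous phi_a -> continuous phi_b -> continuous phi_2 ->
  is_density phi_a -> is_density phi_b -> is_density phi_2 ->
  is_open_interval (supp phi_a) -> is_open_interval (supp phi_b) ->
  is_open_interval (supp phi_2) ->
  supp phi_a = [set x : R | 0 < x /\ (x%:E < ba)%E] ->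
  supp phi_b = [set x : R | 0 < x /\ (x%:E < bb)%E] ->
  (forall t, dens_cdf phi_b t <= dens_cdf phi_a t) ->
  forall y, supp phi_2 y ->
  restr_inv (dens_cdf phi_a) (supp phi_a) (dens_cdf phi_2 y)
  <= restr_inv (dens_cdf phi_b) (supp phi_b) (dens_cdf phi_2 y).
Proof.
move=> ac bc c2 ad bd d2 ao bo o2 Ea Eb Fab y Sy.
have [Sa Fa] := L_spec ac ad ao c2 d2 o2 Sy.
have [Sb Fb] := L_spec bc bd bo c2 d2 o2 Sy.
move: Sa Fa Sb Fb.
move: (restr_inv (dens_cdf phi_a) _ _) (restr_inv (dens_cdf phi_b) _ _) => xa xb Sa Fa Sb Fb.
rewrite leNgt; apply/negP => xbxa.
have Sab : supp phi_a xb.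
  move: Sa Sb; rewrite Ea Eb => -[_ xaba] [xb0 _]; split => //.
  by apply: lt_trans xaba; rewrite lte_fin.
have := F_smono ac ad ao Sab Sa xbxa.
rewrite Fa -Fb => H; have := lt_le_trans H (Fab xb); by rewrite ltxx.
Qed.


Lemma int_compare (R : realType) (phi_a phi_b phi_2 q : R -> R) (ba bb : \bar R) :
  continuous phi_a -> continuous phi_b -> continuous phi_2 ->
  is_density phi_a -> is_density phi_b -> is_density phi_2 ->
  is_open_interval (supp phi_a) -> is_open_interval (supp phi_b) ->
  is_open_interval (supp phi_2) ->
  supp phi_a = [set x : R | 0 < x /\ (x%:E < ba)%E] ->
  supp phi_b = [set x : R | 0 < x /\ (x%:E < bb)%E] ->
  (forall t, dens_cdf phi_b t <= dens_cdf phi_a t) ->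
  (forall x, 0 <= q x) -> continuous q ->
  (\int[@lebesgue_measure R]_(y in supp phi_2)
      (restr_inv (dens_cdf phi_a) (supp phi_a) (dens_cdf phi_2 y) * q y)%:E
   <= \int[@lebesgue_measure R]_(y in supp phi_2)
      (restr_inv (dens_cdf phi_b) (supp phi_b) (dens_cdf phi_2 y) * q y)%:E)%E.
Proof.
move=> ac bc c2 ad bd d2 ao bo o2 Ea Eb Fab q0 qc.
have mS2 : measurable (supp phi_2) by exact: open_measurable (S_open c2).
apply: ge0_le_integral => //.
- by move=> y Sy; rewrite lee_fin; exact: (G_ge0 ac ad ao c2 d2 o2 Ea q0 Sy).
- exact: (G_measE ac ad ao c2 d2 o2 qc).
- exact: (G_measE bc bd bo c2 d2 o2 qc).
- move=> y Sy; rewrite lee_fin; apply: ler_wpM2r => //.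
  exact: (L_compare ac bc c2 ad bd d2 ao bo o2 Ea Eb Fab).
Qed.

Lemma final_step (R : realType) (A B C : set R) (f g h k : R -> R) :
  @measurable _ (measurableTypeR R) A -> @measurable _ (measurableTypeR R) B ->
  (@lebesgue_measure R).-integrable A (fun x => (f x)%:E) ->
  (@lebesgue_measure R).-integrable B (fun x => (g x)%:E) ->
  (\int[@lebesgue_measure R]_(x in A) (f x)%:E = \int[@lebesgue_measure R]_(x in C) (h x)%:E)%E ->
  (\int[@lebesgue_measure R]_(x in B) (g x)%:E = \int[@lebesgue_measure R]_(x in C) (k x)%:E)%E ->
  (\int[@lebesgue_measure R]_(x in C) (h x)%:E <= \int[@lebesgue_measure R]_(x in C) (k x)%:E)%E ->
  Rintegral (@lebesgue_measure R) A f <= Rintegral (@lebesgue_measure R) B g.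
Proof.
move=> mA mB iA iB EA EB le; rewrite /Rintegral; apply: fine_le.
- by have := integrable_fin_num mA iA.
- by have := integrable_fin_num mB iB.
- by rewrite EA EB.
Qed.

Unset Implicit Arguments.
Theorem mainTheorem3 (R : realType) (phi_a phi_b phi_2 q : R -> R) :
  continuous phi_a -> continuous phi_b -> continuous phi_2 ->
  is_density phi_a -> is_density phi_b -> is_density phi_2 ->
  is_open_interval (supp phi_a) -> is_open_interval (supp phi_b) ->
  is_open_interval (supp phi_2) ->
  (exists ba : \bar R, supp phi_a = [set x : R | 0 < x /\ (x%:E < ba)%E]) ->
  (exists bb : \bar R, supp phi_b = [set x : R | 0 < x /\ (x%:E < bb)%E]) ->
  (forall t, dens_cdf phi_b t <= dens_cdf phi_a t) ->
  (forall x, 0 <= q x) -> unif_continuous q ->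
  (@lebesgue_measure R).-integrable setT (fun x => (q x)%:E) ->
  let K_a := fun x => restr_inv (dens_cdf phi_2) (supp phi_2) (dens_cdf phi_a x) in
  let K_b := fun x => restr_inv (dens_cdf phi_2) (supp phi_2) (dens_cdf phi_b x) in
  let g_a := fun x => x * (phi_a x / phi_2 (K_a x)) * q (K_a x) in
  let g_b := fun x => x * (phi_b x / phi_2 (K_b x)) * q (K_b x) in
  (@lebesgue_measure R).-integrable (supp phi_a) (fun x => (g_a x)%:E) ->
  (@lebesgue_measure R).-integrable (supp phi_b) (fun x => (g_b x)%:E) ->
  Rintegral (@lebesgue_measure R) (supp phi_a) g_a
    <= Rintegral (@lebesgue_measure R) (supp phi_b) g_b.
Proof.
move=> ac bc c2 ad bd d2 ao bo o2 [ba Ea] [bb Eb] Fab q0 qu _ K_a K_b g_a g_b ia ib.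
have qc := q_cont qu.
have mSa : measurable (supp phi_a) by exact: open_measurable (S_open ac).
have mSb : measurable (supp phi_b) by exact: open_measurable (S_open bc).
exact: (final_step mSa mSb ia ib (transfer ac ad ao c2 d2 o2 Ea q0 qc)
  (transfer bc bd bo c2 d2 o2 Eb q0 qc)
  (int_compare ac bc c2 ad bd d2 ao bo o2 Ea Eb Fab q0 qc)).
Qed.
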